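(* Let $\{\mu_n\}_{n\ge0}$ be a consistent family of (possibly infinite) measures, $\mu_n$ on $(\Omega_n,\mathcal{B}_n)$. If for some $n_0$ the measure $\mu_{n_0}$ is $\sigma$-finite, then there exists a unique $\sigma$-additive measure $\bar\mu$ on $(\Omega,\mathcal{B})$ such that $\pi_{V_n}(\bar\mu)=\mu_n$ for all $n$.
   Context: Let $\Im^k=(V,L)$ be the Cayley tree of order $k\ge1$, with vertices enumerated as $V=\{x_0,x_1,\dots\}$. Let $\Phi$ be a finite or countably infinite set, $\Omega=\Phi^V$ with metric $\rho(\sigma,\sigma')=\sum_{n\ge0}2^{-n}\mathbf{1}_{\{\sigma(x_n)\ne\sigma'(x_n)\}}$ and Borel $\sigma$-field $\mathcal{B}$. Fix $x^0\in V$, let $d$ be the graph distance, $V_n=\{x\in V: d(x,x^0)\le n\}$, $\Omega_n=\Phi^{V_n}$ (countable, discrete) with $\mathcal{B}_n$ its power set, and $\pi_n:\Omega\to\Omega_n$, $\pi_n(\sigma)=\sigma|_{V_n}$. Projections of measures: $[\pi_{V_i}(\nu)](B)=\nu\{\sigma\in\Omega_j:\sigma|_{V_i}\in B\}$ for $\nu$ on $\mathcal{B}_j$, $i<j$, and $[\pi_{V_n}(\mu)](B)=\mu(\pi_n^{-1}(B))$ for $\mu$ on $\mathcal{B}$. Consistency means $\pi_{V_i}(\mu_j)=\mu_i$ for all $i<j$. *)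

(* Defs.v *)
From HB Require Import structures.
From mathcomp Require Import all_boot all_order all_algebra.
From mathcomp Require Import all_classical all_reals.
From mathcomp Require Import ereal sequences measure.
Set Implicit Arguments. Unset Strict Implicit. Unset Printing Implicit Defensive.
Import Order.TTheory GRing.Theory Num.Theory.
Local Open Scope classical_set_scope.
Local Open Scope ring_scope.

(* The single-spin set Phi : a countable (finite or countably infinite), nonempty type. *)
HB.structure Definition PointedCount := {T of Countable T & isPointed T}.

(* Vertices: reduced words over the alphabet {0..k} (no two consecutive equal letters);
   this is the Cayley graph of the free product of k+1 copies of Z/2, i.e. the
   (k+1)-regular tree.  Edges: w ~ w a. *)
Definition reduced (k : nat) (s : seq 'I_k.+1) : bool :=
  sorted (fun a b : 'I_k.+1 => a != b) s.

Definition CVertex (k : nat) := {s : seq 'I_k.+1 | reduced s}.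

Definition cadj (k : nat) (u w : CVertex k) : bool :=
  let u' := val u in let w' := val w in
  ((w' != [::]) && (u' == take (size w').-1 w')) ||
  ((u' != [::]) && (w' == take (size u').-1 u')).

(* V_n = { x : d(x, x0) <= n } : there is a path of length <= n from x0 to x. *)
Definition inVn (k : nat) (x0 : CVertex k) (n : nat) (x : CVertex k) : Prop :=
  exists p : seq (CVertex k), (size p <= n)%N /\ path (@cadj k) x0 p /\ last x0 p = x.

Lemma inVn_mono (k : nat) (x0 : CVertex k) (i j : nat) (x : CVertex k) :
  (i <= j)%N -> inVn x0 i x -> inVn x0 j x.
Proof. by move=> hij [p [hp [hpath hl]]]; exists p; split => //; exact: leq_trans hp hij. Qed.

Definition Vn (k : nat) (x0 : CVertex k) (n : nat) := {x : CVertex k | inVn x0 n x}.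

Section OmegaN.
Variables (Phi : PointedCount.type) (k : nat) (x0 : CVertex k) (n : nat).
Definition Omega_n := Vn x0 n -> Phi.
HB.instance Definition _ := Pointed.copy Omega_n (Vn x0 n -> Phi).
HB.instance Definition _ := @isMeasurable.Build default_measure_display
  Omega_n discrete_measurable discrete_measurable0
  discrete_measurableC discrete_measurableU.
End OmegaN.

Section OmegaDef.
Variables (R : realType) (Phi : PointedCount.type) (k : nat) (e : nat -> CVertex k).

Definition rho (s s' : CVertex k -> Phi) : \bar R :=
  \sum_(0 <= m <oo) ((2 ^- m * ((s (e m) != s' (e m)) : nat)%:R)%:E)%E.

Definition rho_open (U : set (CVertex k -> Phi)) : Prop :=
  forall s, U s -> exists r : R, 0 < r /\ (forall s', (rho s s' < r%:E)%E -> U s').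

Definition Omega := g_sigma_algebraType rho_open.
End OmegaDef.

Definition pi_n (R : realType) (Phi : PointedCount.type) (k : nat)
  (e : nat -> CVertex k) (x0 : CVertex k) (n : nat)
  (s : Omega R Phi e) : Omega_n Phi x0 n := fun x => s (proj1_sig x).

Definition restr_ij (Phi : PointedCount.type) (k : nat) (x0 : CVertex k) (i j : nat)
  (h : (i <= j)%N) (s : Omega_n Phi x0 j) : Omega_n Phi x0 i :=
  fun x => s (exist _ (proj1_sig x) (inVn_mono h (proj2_sig x))).

(* Main.v *)
Require Import Defs.
From HB Require Import structures.
From mathcomp Require Import all_boot all_order all_algebra.
From mathcomp Require Import all_classical all_reals.
From mathcomp Require Import ereal sequences measure normedtype.
From Stdlib Require Import Lia.
From mathcomp Require Import zify ring.
Import Order.TTheory GRing.Theory Num.Theory.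
Local Open Scope classical_set_scope.
Local Open Scope ring_scope.
Set Implicit Arguments. Unset Strict Implicit. Unset Printing Implicit Defensive.

Section Comb.
Variable k : nat.
Local Notation V := (CVertex k).

Lemma cadj_sym (u w : V) : cadj u w = cadj w u.
Proof. by rewrite /cadj orbC. Qed.

Lemma cadj_size (u w : V) : cadj u w -> (size (val w) <= (size (val u)).+1)%N.
Proof.
rewrite /cadj => /orP[/andP[_ /eqP ->]|/andP[_ /eqP ->]].
  by rewrite size_take; case: (size (val w)) => //= n; rewrite ltnSn leqnn.
by rewrite size_take; case: (size (val u)) => //= n; case: ifP => // _; lia.
Qed.

Lemma path_size (x : V) p : path (@cadj k) x p ->
  (size (val (last x p)) <= size (val x) + size p)%N.
Proof.
elim: p x => [|y p IH] x; first by rewrite /= addn0.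
rewrite [path _ _ _]/= => /andP[hxy hp].
have -> : last x (y :: p) = last y p by [].
have := IH _ hp; have := cadj_size hxy; rewrite [size (y :: p)]/=; lia.
Qed.

Lemma inVn_size (x : V) n v : inVn x n v -> (size (val v) <= size (val x) + n)%N.
Proof. move=> [p [hp [hpath <-]]]; have := path_size hpath; lia. Qed.

Lemma inVn_step (x y z : V) n : inVn x n y -> cadj y z -> inVn x n.+1 z.
Proof.
move=> [p [hp [hpath hl]]] hyz; exists (rcons p z); split; first by rewrite size_rcons.
by rewrite rcons_path hpath hl hyz last_rcons.
Qed.

Lemma inVn_sym (x y : V) n : inVn x n y -> inVn y n x.
Proof.
move=> [p [hp [hpath hl]]]; exists (rev (belast x p)); split.
  by rewrite size_rev size_belast.
split.
  rewrite -hl rev_path; rewrite (@eq_path _ _ (@cadj k)) // => a b /=.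
  by rewrite cadj_sym.
by case: p {hp hpath} hl => [|a p] /= <- //; rewrite rev_cons last_rcons.
Qed.

Lemma inVn_cat (x y z : V) n m : inVn x n y -> inVn y m z -> inVn x (n + m) z.
Proof.
move=> [p [hp [hpath hl]]] [q [hq [hqath hql]]]; exists (p ++ q); split.
  by rewrite size_cat leq_add.
by rewrite cat_path last_cat hl hpath hqath.
Qed.

Definition root : V := exist _ [::] isT.

Lemma reach_root (w : V) : inVn root (size (val w)) w.
Proof.
case: w => s; elim/last_ind: s => [|s a IH] hs.
  by exists [::]; split => //=; split => //; rewrite /root; congr exist; exact: bool_irrelevance.
have hs' : reduced s.
  by move: hs; rewrite /reduced -cats1 => /(take_sorted (size s)); rewrite take_size_cat.
rewrite [size _]/= size_rcons; apply: (inVn_step (IH hs')).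
rewrite /cadj /= -cats1 size_cat /= addn1 /= take_size_cat //.
by rewrite eqxx; case: s {IH hs hs'}.
Qed.

Lemma reach (x v : V) : inVn x (size (val x) + size (val v)) v.
Proof. exact: inVn_cat (inVn_sym (reach_root x)) (reach_root v). Qed.

Fixpoint words (N : nat) : seq (seq 'I_k.+1) :=
  if N is N'.+1 then [::] :: [seq a :: s | a <- enum 'I_k.+1, s <- words N']
  else [:: [::]].

Lemma words_all N s : (size s <= N)%N -> s \in words N.
Proof.
elim: N s => [|N IH] [|a s] //= hs.
rewrite inE; apply/orP; right; apply: allpairs_f; first by rewrite mem_enum.
exact: IH.
Qed.

End Comb.


Section Main.
Variables (Phi : PointedCount.type) (k : nat) (x0 : CVertex k).
Local Notation V := (CVertex k).
Local Notation Om n := (Omega_n Phi x0 n).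

Definition pr n (s : V -> Phi) : Om n := fun x => s (proj1_sig x).
Arguments pr : clear implicits.

Definition ext n (w : Om n) : V -> Phi := fun v =>
  match pselect (inVn x0 n v) with left h => w (exist _ v h) | right _ => point end.

Lemma Vn_eq n (v v' : Vn x0 n) : proj1_sig v = proj1_sig v' -> v = v'.
Proof.
case: v v' => x hx [x' hx'] /= exx; subst x'.
by rewrite (Prop_irrelevance hx hx').
Qed.

Lemma pr_ext n (w : Om n) : pr n (ext w) = w.
Proof.
apply: funext => x; rewrite /pr /ext.
case: pselect => [h|/(_ (proj2_sig x))//].
by congr w; apply: Vn_eq.
Qed.

Lemma preimage_pr_inj n (B B' : set (Om n)) :
  pr n @^-1` B = pr n @^-1` B' -> B = B'.
Proof.
move=> h; apply/seteqP; split => w.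
  move=> Bw; have : (pr n @^-1` B') (ext w) by rewrite -h /= pr_ext.
  by rewrite /= pr_ext.
move=> Bw; have : (pr n @^-1` B) (ext w) by rewrite h /= pr_ext.
  by rewrite /= pr_ext.
Qed.

Definition gcode n (w : Om n) (s : seq 'I_k.+1) : option Phi :=
  match pselect (exists v : Vn x0 n, sval (sval v) = s) with
  | left H => Some (w (proj1_sig (cid H))) | right _ => None end.

Definition enc n (w : Om n) : seq (option Phi) :=
  [seq gcode w s | s <- words k (size (sval x0) + n)].

Lemma enc_inj n : injective (@enc n).
Proof.
move=> w w' /eq_in_map h; apply: funext => v.
have hv : sval (sval v) \in words k (size (sval x0) + n).
  by apply: words_all; exact: inVn_size (proj2_sig v).
have := h _ hv; rewrite /gcode; case: pselect => [H|]; last first.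
  by move=> /(_ (ex_intro _ v erefl)).
case: (cid H) => v' /= hv' [].
suff -> : v' = v by [].
by apply: Vn_eq; apply: val_inj.
Qed.

Definition enc_code n (w : Om n) : nat := pickle (enc w).

Lemma enc_code_inj n : injective (@enc_code n).
Proof. by move=> w w' /(pcan_inj pickleK_inv) /enc_inj. Qed.

End Main.
Arguments pr {Phi k x0} n s.


Section CylType.
Variables (Phi : PointedCount.type) (k : nat) (x0 : CVertex k).
Local Notation V := (CVertex k).
Local Notation Om n := (Omega_n Phi x0 n).
Local Notation pr := (@pr Phi k x0).

Definition Cyl (x : CVertex k) := V -> Phi.
HB.instance Definition _ := Pointed.copy (Cyl x0) (V -> Phi).
Local Notation CT := (Cyl x0).

Definition isCyl (A : set CT) := exists n (B : set (Om n)), A = pr n @^-1` B.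

Lemma pr_lift n m (h : (n <= m)%N) (B : set (Om n)) :
  pr n @^-1` B = pr m @^-1` (restr_ij h @^-1` B).
Proof. by []. Qed.

Lemma cyl_lift A n : isCyl A -> exists m, (n <= m)%N /\ exists B, A = pr m @^-1` B.
Proof.
move=> [m [B ->]]; exists (maxn n m); split; first exact: leq_maxl.
by exists (restr_ij (leq_maxr n m) @^-1` B); exact: pr_lift.
Qed.

Lemma cyl2 A A' : isCyl A -> isCyl A' ->
  exists m (B B' : set (Om m)), A = pr m @^-1` B /\ A' = pr m @^-1` B'.
Proof.
move=> [n [B ->]] hA'; have [m [hnm [B' ->]]] := cyl_lift n hA'.
by exists m, (restr_ij hnm @^-1` B), B'; split => //; exact: pr_lift.
Qed.

Lemma cyl0 : isCyl set0.
Proof. by exists 0%N, set0; rewrite preimage_set0. Qed.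

Lemma cylU : setU_closed isCyl.
Proof.
move=> A A' hA hA'; have [m [B [B' [-> ->]]]] := cyl2 hA hA'.
by exists m, (B `|` B').
Qed.

Lemma cylD : setD_closed isCyl.
Proof.
move=> A A' hA hA'; have [m [B [B' [-> ->]]]] := cyl2 hA hA'.
by exists m, (B `\` B').
Qed.

Lemma cylI : setI_closed isCyl.
Proof.
move=> A A' hA hA'; have [m [B [B' [-> ->]]]] := cyl2 hA hA'.
by exists m, (B `&` B').
Qed.

HB.instance Definition _ := @isRingOfSets.Build default_measure_display (Cyl x0)
  isCyl cyl0 cylU cylD.

End CylType.
Arguments Cyl : clear implicits.

Section Content.
Variables (R : realType) (Phi : PointedCount.type) (k : nat) (x0 : CVertex k).
Local Notation V := (CVertex k).
Local Notation Om n := (Omega_n Phi x0 n).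
Local Notation pr := (@pr Phi k x0).
Local Notation CT := (Cyl Phi k x0).
Variable mu : forall n : nat, {measure set (Om n) -> \bar R}.
Hypothesis hcons : forall (i j : nat) (hij : (i < j)%N) (B : set (Om i)),
      mu j (restr_ij (ltnW hij) @^-1` B) = mu i B.

Lemma same_mu n m (B : set (Om n)) (B' : set (Om m)) :
  pr n @^-1` B = pr m @^-1` B' -> mu n B = mu m B'.
Proof.
wlog hnm : n m B B' / (n <= m)%N.
  move=> W h; case: (leqP n m) => hnm; first exact: W.
  by apply/esym; apply: W; [exact: ltnW|].
rewrite leq_eqVlt in hnm; case/orP: hnm => [/eqP enm|hnm].
  by subst m => /preimage_pr_inj ->.
rewrite (pr_lift (ltnW hnm)) => /preimage_pr_inj <-.
by rewrite hcons.
Qed.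

Definition lev (A : set CT) : nat :=
  xget 0%N [set n | exists B : set (Om n), A = pr n @^-1` B].

Definition cont (A : set CT) : \bar R := mu (lev A) (pr (lev A) @` A).

Lemma pr_surj n : pr n @` setT = setT.
Proof.
by apply/seteqP; split => // w _; exists (ext w) => //; exact: pr_ext.
Qed.

Lemma contE n (B : set (Om n)) : cont (pr n @^-1` B) = mu n B.
Proof.
rewrite /cont; set L := lev _.
have [B' hB'] : exists B' : set (Om L), pr n @^-1` B = pr L @^-1` B'.
  by apply: (xgetPex 0%N (P := [set n0 | exists B0 : set (Om n0), _ = _])); exists n, B.
rewrite hB' image_preimage ?pr_surj //; apply/esym; exact: same_mu.
Qed.

Lemma cont_ge0 A : (0 <= cont A)%E.
Proof. exact: measure_ge0. Qed.

Lemma cont0 : cont set0 = 0%E.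
Proof. by rewrite -(preimage_set0 (pr 0%N)) contE measure0. Qed.

Lemma cont_additive2 : additive2 cont.
Proof.
move=> A A' hA hA' hAA'; have [m [B [B' [eA eA']]]] := cyl2 hA hA'.
subst A A'; rewrite -preimage_setU !contE measureU //.
apply: (@preimage_pr_inj _ _ x0 m); rewrite preimage_setI hAA' preimage_set0 //.
Qed.

Lemma cont_semi_additive : measure_function.semi_additive cont.
Proof. exact: ((measure_function.additive2P cont0).2 cont_additive2). Qed.

Lemma cont_mono A A' : isCyl A -> isCyl A' -> A `<=` A' -> (cont A <= cont A')%E.
Proof.
move=> hA hA' hAA'; have [m [B [B' [eA eA']]]] := cyl2 hA hA'.
subst A A'; rewrite !contE; apply: le_measure; rewrite ?inE //.
by move=> w Bw; have := hAA' (ext w); rewrite /preimage /= pr_ext; apply.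
Qed.

End Content.


Section Dom.
Variables (R : realType) (Phi : PointedCount.type) (k : nat) (x0 : CVertex k).
Local Notation Om n := (Omega_n Phi x0 n).

Lemma mOm n (B : set (Om n)) : measurable B.
Proof. by []. Qed.

Lemma dom n (nu la : {measure set (Om n) -> \bar R}) (F : set (Om n)) :
  (forall c, F c -> (nu [set c] <= la [set c])%E) -> (nu F <= la F)%E.
Proof.
move=> h.
pose G t := F `&` [set c | enc_code c = t].
have FG : F = \bigcup_t G t.
  by apply/seteqP; split => [c Fc|c [t _ []//]]; exists (enc_code c).
have tG : trivIset setT G.
  apply/trivIsetP => i j _ _ ij; apply/seteqP; split => // c [[_ ci] [_ cj]].
  by move: ij; rewrite -ci -cj eqxx.
rewrite FG !measure_semi_bigcup //; apply: lee_nneseries => // t _.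
have [[c [Fc ct]]|nc] := pselect (exists c, F c /\ enc_code c = t).
  suff -> : G t = [set c] by exact: h.
  apply/seteqP; split => [c' [Fc' /= c't]|c' /= ->//].
  by apply: enc_code_inj; rewrite c't ct.
suff -> : G t = set0 by rewrite !measure0.
by apply/seteqP; split => // c [Fc ct]; apply: nc; exists c.
Qed.

Section TM.
Variables (M j : nat) (m : {measure set (Om M) -> \bar R}) (E : set (Om M))
  (f : Om M -> Om j).
Definition tm (B : set (Om j)) : \bar R := m (E `&` f @^-1` B).
Let tm0 : tm set0 = 0%E.
Proof. by rewrite /tm preimage_set0 setI0 measure0. Qed.
Let tm_ge0 B : (0 <= tm B)%E.
Proof. exact: measure_ge0. Qed.
Let tm_sa : semi_sigma_additive tm.
Proof.
move=> F mF tF mUF; rewrite /tm preimage_bigcup setI_bigcupr.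
apply: measure_semi_sigma_additive => //.
apply/trivIsetP => i j' _ _ ij; move/trivIsetP : tF => /(_ i j' I I ij) h.
apply/seteqP; split => // c [[_ hi] [_ hj]].
by have : (F i `&` F j') (f c) by []; rewrite h.
Qed.
HB.instance Definition _ := isMeasure.Build _ _ _ tm tm0 tm_ge0 tm_sa.
End TM.

End Dom.


Lemma series_ge_term (R : realType) (f : nat -> \bar R) i :
  (forall n, (0 <= f n)%E) -> (f i <= \sum_(0 <= n <oo) f n)%E.
Proof.
move=> f0; apply: le_trans (nneseries_lim_ge i.+1 _); last by move=> n _ _; exact: f0.
rewrite big_nat_recr //=; apply: leeDr.
by rewrite big_seq_cond; apply: sume_ge0 => n _; exact: f0.
Qed.

Section Sub.
Variables (R : realType) (Phi : PointedCount.type) (k : nat) (x0 : CVertex k).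
Local Notation V := (CVertex k).
Local Notation Om n := (Omega_n Phi x0 n).
Local Notation pr := (@pr Phi k x0).
Local Notation CT := (Cyl Phi k x0).
Variable mu : forall n : nat, {measure set (Om n) -> \bar R}.
Hypothesis hcons : forall (i j : nat) (hij : (i < j)%N) (B : set (Om i)),
      mu j (restr_ij (ltnW hij) @^-1` B) = mu i B.
Local Notation cont := (@cont R Phi k x0 mu).

Lemma pr_mono a b (h : (a <= b)%N) (s s' : V -> Phi) : pr b s = pr b s' -> pr a s = pr a s'.
Proof.
move=> e; apply: funext => x.
exact: (congr1 (fun g => g (exist _ (sval x) (inVn_mono h (proj2_sig x)))) e).
Qed.

Lemma nu_ex (C : set CT) j : isCyl C -> exists nu : {measure set (Om j) -> \bar R},
  forall B, nu B = cont (C `&` pr j @^-1` B).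
Proof.
move=> [n [E ->]].
exists (tm (mu (maxn n j)) (restr_ij (leq_maxl n j) @^-1` E) (restr_ij (leq_maxr n j))) => B.
exact: esym (contE hcons (restr_ij (leq_maxl n j) @^-1` E `&` restr_ij (leq_maxr n j) @^-1` B)).
Qed.


Lemma cont_sub (A : set CT) (F : nat -> set CT) :
  (forall n, isCyl (F n)) -> isCyl A -> A `<=` \bigcup_n F n ->
  (cont A <= \sum_(n <oo) cont (F n))%E.
Proof.
move=> hF [N [B ->]] hAF.
pose nu i j := proj1_sig (cid (nu_ex j (hF i))).
have nuE i j X : nu i j X = cont (F i `&` pr j @^-1` X).
  exact: (proj2_sig (cid (nu_ex j (hF i))) X).
pose la j := mseries (fun i => nu i j) 0.
have laE j X : la j X = (\sum_(0 <= i <oo) cont (F i `&` pr j @^-1` X))%E.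
  by rewrite /la /mseries; apply: eq_eseriesr => i _; exact: nuE.
have L : forall m (w : Om m), pr m @^-1` [set w] `<=` \bigcup_n F n ->
    (mu m [set w] <= la m [set w])%E.
  move=> m w hw; rewrite leNgt; apply/negP => hbad.
  pose bad j (s : V -> Phi) := (la j [set pr j s] < mu j [set pr j s])%E.
  have step j s : bad j s -> exists s', bad j.+1 s' /\ pr j s' = pr j s.
    move=> hs; have [//|hn] := pselect (exists s', bad j.+1 s' /\ pr j s' = pr j s).
    exfalso.
    pose Fb := restr_ij (ltnW (ltnSn j)) @^-1` [set pr j s].
    have hle : (mu j.+1 Fb <= la j.+1 Fb)%E.
      apply: dom => c hc; rewrite leNgt; apply/negP => hc'; apply: hn.
      exists (ext c); split; first by rewrite /bad pr_ext.
      have -> : pr j (ext c) = restr_ij (ltnW (ltnSn j)) (pr j.+1 (ext c)) by [].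
      by rewrite pr_ext; exact: hc.
    have e : la j.+1 Fb = la j [set pr j s] by rewrite !laE.
    rewrite e /Fb hcons in hle.
    by move: (lt_le_trans hs hle); rewrite ltxx.
  have /choice [stp hstp] : forall js : nat * (V -> Phi), exists s',
      bad js.1 js.2 -> bad js.1.+1 s' /\ pr js.1 s' = pr js.1 js.2.
    move=> [j s]; have [hb|hb] := pselect (bad j s).
      by have [s' hs'] := step j s hb; exists s'.
    by exists s.
  pose S := fix S (t : nat) : V -> Phi := if t is t'.+1 then stp (t' + m, S t')%N else ext w.
  have Sbad : forall t, bad (t + m)%N (S t).
    elim => [|t IH]; first by rewrite /bad /= pr_ext.
    exact: (hstp (t + m, S t)%N IH).1.
  have Sagr t : pr (t + m)%N (S t.+1) = pr (t + m)%N (S t).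
    exact: (hstp (t + m, S t)%N (Sbad t)).2.
  have Sagr2 t t' : (t <= t')%N -> pr (t + m)%N (S t') = pr (t + m)%N (S t).
    elim: t' => [|t' IH]; first by rewrite leqn0 => /eqP ->.
    rewrite leq_eqVlt => /orP[/eqP ->//|h].
    rewrite -(IH h); apply: (pr_mono _ (Sagr t')).
    by rewrite leq_add2r.
  pose idx (v : V) := (size (sval x0) + size (sval v))%N.
  pose ss (v : V) := S (idx v) v.
  have ssE t : pr (t + m)%N ss = pr (t + m)%N (S t).
    apply: funext => x; rewrite /ss /pr.
    pose T := maxn t (idx (sval x)).
    have h1 := Sagr2 t T (leq_maxl _ _).
    have h2 := Sagr2 (idx (sval x)) T (leq_maxr _ _).
    have hv : inVn x0 (idx (sval x) + m) (sval x).
      exact: inVn_mono (leq_addr m _) (reach x0 (sval x)).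
    have e1 := congr1 (fun g => g x) h1.
    have e2 := congr1 (fun g => g (exist _ (sval x) hv)) h2.
    rewrite /pr /= in e1 e2; by rewrite -e2 e1.
  have [i _ hi] : (\bigcup_n F n) ss.
    apply: hw; rewrite /preimage /=.
    by have := ssE 0%N; rewrite [(0 + m)%N]/= => ->; rewrite pr_ext.
  have [n [E eF]] := hF i.
  have hb := Sbad n.
  have e1 : (cont (F i `&` pr (n + m)%N @^-1` [set pr (n + m)%N (S n)]) <=
      la (n + m)%N [set pr (n + m)%N (S n)])%E.
    rewrite laE; have h := @series_ge_term R (fun i0 => cont (F i0 `&` pr (n + m)%N @^-1` [set pr (n + m)%N (S n)])) i.
    by apply: h => j; exact: cont_ge0.
  have e2 : F i `&` pr (n + m)%N @^-1` [set pr (n + m)%N (S n)] =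
      pr (n + m)%N @^-1` [set pr (n + m)%N (S n)].
    apply/seteqP; split => [s [] //|s hs]; split => //.
    rewrite eF; rewrite eF in hi; rewrite /preimage /=.
    have : pr (n + m)%N s = pr (n + m)%N ss by rewrite ssE.
    by move/(pr_mono (leq_addr m n)) ->.
  rewrite e2 (contE hcons) in e1.
  by move: (lt_le_trans hb e1); rewrite ltxx.
rewrite (contE hcons); apply: (@le_trans _ _ (la N B)).
  apply: dom => c hc; apply: L => s hs; apply: hAF; rewrite /preimage /=.
  by rewrite hs.
rewrite laE; apply: lee_nneseries => [i _ _|i _]; first exact: cont_ge0.
apply: (cont_mono hcons); [exact: cylI (hF i) (ex_intro _ N (ex_intro _ B erefl))|exact: hF|exact: subIsetl].
Qed.

End Sub.


Lemma tail_bound (R : realType) N K :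
  \sum_(0 <= m < N) (if (K < m)%N then (2:R) ^- m else 0) <= 2 ^- K.
Proof.
have h0 d : \sum_(0 <= m < K.+1 + d) (if (K < m)%N then (2:R) ^- m else 0)
    = 2 ^- K - 2 ^- (K + d).
  elim: d => [|d IH].
    rewrite !addn0 subrr big_nat_cond big1 // => m /andP[/andP[_ hm] _].
    by rewrite ltnNge -ltnS hm.
  rewrite addnS big_nat_recr //= IH ltnS leq_addr addSn -addnS.
  rewrite !addnS exprS invfM.
  have h2 : (2:R) != 0 by rewrite pnatr_eq0.
  field.
  by rewrite !expf_neq0.
case: (leqP N K.+1) => hN.
  rewrite big_nat_cond big1; first by rewrite invr_ge0 exprn_ge0.
  move=> m /andP[/andP[_ hm] _]; rewrite ltnNge.
  by have -> : (m <= K)%N by lia.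
rewrite -(subnKC (ltnW hN)) h0 gerBl invr_ge0 exprn_ge0 //.
Qed.

Section Topo.
Variables (R : realType) (Phi : PointedCount.type) (k : nat) (e : nat -> CVertex k)
  (he : bijective e) (x0 : CVertex k).
Local Notation V := (CVertex k).
Local Notation pr := (@pr Phi k x0).
Local Notation rho := (@rho R Phi k e).

Lemma rho_ge_term (s s' : V -> Phi) m : s (e m) != s' (e m) ->
  (((2:R) ^- m)%:E <= rho s s')%E.
Proof.
move=> hd.
have h := @series_ge_term R (fun m0 => (((2:R) ^- m0 * ((s (e m0) != s' (e m0)) : nat)%:R)%:E)) m.
rewrite /= hd mulr1 in h; apply: h.
by move=> n; rewrite lee_fin mulr_ge0 // invr_ge0 exprn_ge0.
Qed.

Lemma cyl_open (A : set (V -> Phi)) : @isCyl Phi k x0 A -> @rho_open R Phi k e A.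
Proof.
move=> [n [B ->]] s As.
have [einv eK Ke] := he.
pose L := words k (size (sval x0) + n).
pose Km := \max_(w <- L) (if insub w is Some v then einv v else 0%N).
exists (2 ^- Km); split; first by rewrite invr_gt0 exprn_gt0.
move=> s' hr; rewrite /preimage /=.
suff -> : pr n s' = pr n s by [].
apply: funext => x; apply/eqP; move: hr; apply: contraLR => hd.
rewrite -leNgt.
apply: le_trans (rho_ge_term (m := einv (sval x)) _); last first.
  by rewrite Ke eq_sym.
rewrite lee_fin lef_pV2 ?posrE ?exprn_gt0 // ler_eXn2l ?ltr1n //.
have hw : sval (sval x) \in L by apply: words_all; exact: inVn_size (proj2_sig x).
have := @leq_bigmax_seq _ L xpredT (fun w => if insub w is Some v then einv v else 0%N) _ hw isT.
by rewrite valK.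
Qed.

Lemma open_cyl (U : set (V -> Phi)) : @rho_open R Phi k e U ->
  <<s @isCyl Phi k x0>> U.
Proof.
move=> hU.
have -> : U = \bigcup_n (pr n @^-1` [set w | pr n @^-1` [set w] `<=` U]).
  apply/seteqP; split => [s Us|s [n _ hn]]; last by apply: hn.
  have [r [r0 hr]] := hU s Us.
  have [K hK] : exists K, 2 ^- K < r.
    exists (Num.truncn r^-1).+1.
    rewrite -[r]invrK ltf_pV2 ?posrE ?invr_gt0 ?exprn_gt0 //.
    apply: lt_le_trans (truncnS_gt _) _.
    rewrite -natrX ler_nat !invrK.
    exact: ltnW (ltn_expl _ (isT : (1 < 2)%N)).
  pose n := \max_(j < K.+1) (size (sval x0) + size (sval (e j)))%N.
  exists n => //; move=> s' /= hs'; apply: hr.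
  have agr m : (m <= K)%N -> s (e m) = s' (e m).
    move=> hm.
    have hv : inVn x0 n (e m).
      apply: inVn_mono (reach x0 (e m)).
      exact: (@leq_bigmax _ (fun j : 'I_K.+1 => (size (sval x0) + size (sval (e j)))%N) (Ordinal (hm : (m < K.+1)%N))).
    exact: esym (congr1 (fun g => g (exist _ (e m) hv)) hs').
  apply: le_lt_trans (_ : (((2:R) ^- K)%:E < r%:E)%E); last by rewrite lte_fin.
  rewrite /rho; apply: lime_le; first by apply: is_cvg_nneseries => n0 _ _;
    rewrite lee_fin mulr_ge0 // invr_ge0 exprn_ge0.
  apply: nearW => N; rewrite sumEFin lee_fin.
  apply: le_trans (tail_bound R N K).
  apply: ler_sum => m _; case: ifPn => hKm.
    by case: (_ != _); rewrite ?mulr1 ?mulr0 // invr_ge0 exprn_ge0.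
  by rewrite agr ?eqxx ?mulr0 // leqNgt.
apply: sigma_algebra_bigcup => n; apply: sub_sigma_algebra.
by exists n, [set w | pr n @^-1` [set w] `<=` U].
Qed.

Lemma sigma_eq : <<s @rho_open R Phi k e>> = <<s @isCyl Phi k x0>>.
Proof.
apply/seteqP; split.
  apply: smallest_sub; first exact: smallest_sigma_algebra.
  exact: open_cyl.
apply: smallest_sub; first exact: smallest_sigma_algebra.
by move=> A hA; apply: sub_sigma_algebra; exact: cyl_open.
Qed.

End Topo.


Section Final.
Variables (R : realType) (Phi : PointedCount.type) (k : nat) (e : nat -> CVertex k)
  (he : bijective e) (x0 : CVertex k).
Local Notation V := (CVertex k).
Local Notation Om n := (Omega_n Phi x0 n).
Local Notation pr := (@pr Phi k x0).
Local Notation CT := (Cyl Phi k x0).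
Variable mu : forall n : nat, {measure set (Om n) -> \bar R}.
Hypothesis hcons : forall (i j : nat) (hij : (i < j)%N) (B : set (Om i)),
      mu j (restr_ij (ltnW hij) @^-1` B) = mu i B.
Local Notation cont := (@cont R Phi k x0 mu).

HB.instance Definition _ := isContent.Build _ CT R cont (@cont_ge0 _ _ _ _ mu) (cont_semi_additive hcons).

Lemma cont_ssa : measurable_subset_sigma_subadditive cont.
Proof. move=> A F mF mA; exact: cont_sub. Qed.

HB.instance Definition _ := Content_SigmaSubAdditive_isMeasure.Build _ R CT cont cont_ssa.

Definition mbar : set (Omega R Phi e) -> \bar R := measure_extension cont.

Lemma meas_transfer (A : set (Omega R Phi e)) : measurable A ->
  (@measurable _ (g_sigma_algebraType (@measurable _ CT))) A.
Proof.
move=> mA; have : <<s @rho_open R Phi k e>> A by [].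
by rewrite (@sigma_eq R Phi k e he x0).
Qed.

Let mbar0 : mbar set0 = 0%E.
Proof. exact: (measure0 (measure_extension cont)). Qed.
Let mbar_ge0 A : (0 <= mbar A)%E.
Proof. exact: (measure_ge0 (measure_extension cont)). Qed.
Let mbar_ssa : semi_sigma_additive mbar.
Proof.
move=> F mF tF mUF.
apply: (@measure_semi_sigma_additive _ _ _ (measure_extension cont)) => //.
- by move=> i; apply: meas_transfer.
- exact: meas_transfer.
Qed.

HB.instance Definition _ := isMeasure.Build _ (Omega R Phi e) R mbar mbar0 mbar_ge0 mbar_ssa.

Lemma final (hsf : exists n0 : nat, sigma_finite setT (mu n0)) :
  exists mubar : {measure set (Omega R Phi e) -> \bar R},
    (forall (n : nat) (B : set (Om n)),
        mubar (@pi_n R Phi k e x0 n @^-1` B) = mu n B) /\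
    (forall nu : {measure set (Omega R Phi e) -> \bar R},
        (forall (n : nat) (B : set (Om n)),
            nu (@pi_n R Phi k e x0 n @^-1` B) = mu n B) ->
        forall A : set (Omega R Phi e), measurable A -> nu A = mubar A).
Proof.
have marg n B : mbar (@pi_n R Phi k e x0 n @^-1` B) = mu n B.
  rewrite /mbar /measure_extension measurable_mu_extE; first exact: contE.
  by exists n, B.
exists mbar; split => // nu hnu A mA.
have [n0 [F FT hF]] := hsf.
apply/esym.
apply: (@measure_unique _ R (Omega R Phi e) (@isCyl Phi k x0) (fun i => pr n0 @^-1` F i)) => //.
- exact: (@sigma_eq R Phi k e he x0).
- exact: cylI.
- by move=> i; exists n0, (F i).
- by rewrite -preimage_bigcup -FT preimage_setT.
- by move=> _ [n [B ->]]; exact: (etrans (marg n B) (esym (hnu n B))).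
- by move=> i; have h := (hF i).2; rewrite -(marg n0 (F i)) in h; exact: h.
Qed.

End Final.


Theorem mainTheorem8 (R : realType) (Phi : PointedCount.type) (k : nat) (hk : (1 <= k)%N)
  (e : nat -> CVertex k) (he : bijective e) (x0 : CVertex k)
  (mu : forall n : nat, {measure set (Omega_n Phi x0 n) -> \bar R})
  (hcons : forall (i j : nat) (hij : (i < j)%N) (B : set (Omega_n Phi x0 i)),
      mu j (restr_ij (ltnW hij) @^-1` B) = mu i B)
  (hsf : exists n0 : nat, sigma_finite setT (mu n0)) :
  exists mubar : {measure set (Omega R Phi e) -> \bar R},
    (forall (n : nat) (B : set (Omega_n Phi x0 n)),
        mubar (@pi_n R Phi k e x0 n @^-1` B) = mu n B) /\
    (forall nu : {measure set (Omega R Phi e) -> \bar R},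
        (forall (n : nat) (B : set (Omega_n Phi x0 n)),
            nu (@pi_n R Phi k e x0 n @^-1` B) = mu n B) ->
        forall A : set (Omega R Phi e), measurable A -> nu A = mubar A).
Proof. exact: final. Qed.
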